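(* A function $f:\Omega_D\to\mathbb{O}$ is both slice Fueter-regular and slice regular if and only if it is constant.
   Context: Octonions $\mathbb{O}=\mathbb{H}+\ell\mathbb{H}$ (Cayley–Dickson product $(a+\ell b)(c+\ell d)=(ac-d\bar b)+\ell(\bar a d+cb)$), identified with $\mathbb{R}^8$; $\mathbb{S}=\{I\in\mathbb{O}:I^2=-1\}$. $D\subset\mathbb{R}^2$ is a non-empty open set invariant under $(x_0,x_1)\mapsto(x_0,-x_1)$, $\Omega_D=\{x_0+x_1I:(x_0,x_1)\in D,I\in\mathbb{S}\}$, assumed connected. A stem function is $F=(F_1,F_2):D\to\mathbb{O}^2$ with $F_1$ even and $F_2$ odd in $x_1$; it induces the slice function $f(x_0+x_1I)=F_1(x_0,x_1)+IF_2(x_0,x_1)$. A slice function is slice regular if its stem function $F$ is $C^1$ and $\frac{\partial F_1}{\partial x_0}=\frac{\partial F_2}{\partial x_1}$, $\frac{\partial F_1}{\partial x_1}=-\frac{\partial F_2}{\partial x_0}$ on $D$. Let $E=\{(x_0,x_1,x_2,x_3):(x_0,(x_1^2+x_2^2+x_3^2)^{1/2})\in D\}$, $\mathcal N=\{(I,J)\in\mathbb{S}^2:I\perp J\}$, and let $O(3)$ be the real orthogonal $4\times4$ matrices fixing the first basis vector, acting on $\mathbb{R}^4$, $\mathbb{O}^4$ by matrix–column multiplication. $f:\Omega_D\to\mathbb{O}$ is slice Fueter-regular if there is $\mathcal F=(\mathcal F_0,\dots,\mathcal F_3):E\to\mathbb{O}^4$ of class $C^1$ with $\mathcal F(Av)=A\mathcal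 F(v)$ ($A\in O(3)$), $f(x_0+x_1I+x_2J+x_3(IJ))=\mathcal F_0(v)+I\mathcal F_1(v)+J\mathcal F_2(v)+(IJ)\mathcal F_3(v)$ for all $v=(x_0,\dots,x_3)\in E$, $(I,J)\in\mathcal N$, and $\partial_0\mathcal F_0-\partial_1\mathcal F_1-\partial_2\mathcal F_2-\partial_3\mathcal F_3=0$, $\partial_1\mathcal F_0+\partial_0\mathcal F_1-\partial_3\mathcal F_2+\partial_2\mathcal F_3=0$, $\partial_2\mathcal F_0+\partial_3\mathcal F_1+\partial_0\mathcal F_2-\partial_1\mathcal F_3=0$, $\partial_3\mathcal F_0-\partial_2\mathcal F_1+\partial_1\mathcal F_2+\partial_0\mathcal F_3=0$ on $E$. *)

(* Defs.v *)
From HB Require Import structures.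
From mathcomp Require Import all_boot all_order all_algebra.
From mathcomp Require Import all_classical all_reals all_analysis.

Set Implicit Arguments.
Unset Strict Implicit.
Unset Printing Implicit Defensive.

Import Order.TTheory GRing.Theory Num.Theory.
Import numFieldNormedType.Exports.
Local Open Scope classical_set_scope.
Local Open Scope ring_scope.

Definition quat (R : realType) := 'rV[R]_4.

Definition qc {R : realType} (x : quat R) (k : nat) : R := x ord0 (inord k).

Definition qmk {R : realType} (a0 a1 a2 a3 : R) : quat R :=
  \row_(i < 4) nth 0 [:: a0; a1; a2; a3] i.

Definition qmul {R : realType} (x y : quat R) : quat R :=
  qmk (qc x 0 * qc y 0 - qc x 1 * qc y 1 - qc x 2 * qc y 2 - qc x 3 * qc y 3)
      (qc x 0 * qc y 1 + qc x 1 * qc y 0 + qc x 2 * qc y 3 - qc x 3 * qc y 2)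
      (qc x 0 * qc y 2 - qc x 1 * qc y 3 + qc x 2 * qc y 0 + qc x 3 * qc y 1)
      (qc x 0 * qc y 3 + qc x 1 * qc y 2 - qc x 2 * qc y 1 + qc x 3 * qc y 0).

Definition qconj {R : realType} (x : quat R) : quat R :=
  qmk (qc x 0) (- qc x 1) (- qc x 2) (- qc x 3).

(* x = a + l b  has coordinates (a0,a1,a2,a3,b0,b1,b2,b3). *)
Definition oct (R : realType) := 'rV[R]_8.

Definition ofst {R : realType} (x : oct R) : quat R := \row_(i < 4) x ord0 (inord i).
Definition osnd {R : realType} (x : oct R) : quat R := \row_(i < 4) x ord0 (inord (i + 4)).
Definition omk {R : realType} (a b : quat R) : oct R :=
  \row_(i < 8) (if (i < 4)%N then a ord0 (inord i) else b ord0 (inord (i - 4))).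

(* Cayley--Dickson product (a + l b)(c + l d) = (ac - d conj(b)) + l(conj(a) d + c b) *)
Definition omul {R : realType} (x y : oct R) : oct R :=
  let a := ofst x in let b := osnd x in let c := ofst y in let d := osnd y in
  omk (qmul a c - qmul d (qconj b)) (qmul (qconj a) d + qmul c b).

Definition oreal {R : realType} (r : R) : oct R :=
  \row_(i < 8) (if val i == 0%N then r else 0).

Definition slice_unit {R : realType} (I : oct R) : Prop := omul I I = oreal (-1).

Definition oinner {R : realType} (x y : oct R) : R := \sum_(k < 8) x ord0 k * y ord0 k.

Definition pt2 {R : realType} (a b : R) : 'cV[R]_2 :=
  \col_(i < 2) (if val i == 0%N then a else b).

Definition vc {R : realType} {n : nat} (v : 'cV[R]_n.+1) (k : nat) : R := v (inord k) ord0.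

Definition ebasis {R : realType} {n : nat} (k : nat) : 'cV[R]_n.+1 := delta_mx (inord k) ord0.

Definition pderiv {R : realType} {n : nat} {V : normedModType R}
  (f : 'cV[R]_n.+1 -> V) (k : nat) (x : 'cV[R]_n.+1) : V := 'D_(ebasis k) f x.

Definition C1_on {R : realType} {n : nat} {V : normedModType R}
  (U : set 'cV[R]_n.+1) (f : 'cV[R]_n.+1 -> V) : Prop :=
  forall k : 'I_n.+1,
    (forall x, U x -> derivable f x (ebasis k)) /\
    (forall x, U x -> {for x, continuous (pderiv f k)}).

Definition OmegaD {R : realType} (D : set 'cV[R]_2) : set (oct R) :=
  [set q | exists x0 x1 I, D (pt2 x0 x1) /\ slice_unit I /\ q = oreal x0 + x1 *: I].

Definition Eset {R : realType} (D : set 'cV[R]_2) : set 'cV[R]_4 :=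
  [set v | D (pt2 (vc v 0) (Num.sqrt (vc v 1 ^+ 2 + vc v 2 ^+ 2 + vc v 3 ^+ 2)))].

Definition O3 {R : realType} (A : 'M[R]_4) : Prop :=
  A^T *m A = 1%:M /\ A *m ebasis 0 = ebasis 0.

Definition slice_regular {R : realType} (D : set 'cV[R]_2) (f : oct R -> oct R) : Prop :=
  exists F1 F2 : 'cV[R]_2 -> oct R,
    (forall x0 x1, D (pt2 x0 x1) ->
        F1 (pt2 x0 (- x1)) = F1 (pt2 x0 x1) /\ F2 (pt2 x0 (- x1)) = - F2 (pt2 x0 x1)) /\
    (forall x0 x1 I, D (pt2 x0 x1) -> slice_unit I ->
        f (oreal x0 + x1 *: I) = F1 (pt2 x0 x1) + omul I (F2 (pt2 x0 x1))) /\
    C1_on D F1 /\ C1_on D F2 /\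
    (forall p, D p ->
        pderiv F1 0 p = pderiv F2 1 p /\ pderiv F1 1 p = - pderiv F2 0 p).

(* cF : E -> O^4 is represented as a 4x8 matrix whose j-th row is cF_j;
   then the O(3)-action A cF(v) is the matrix product A *m cF(v). *)
Definition slice_Fueter_regular {R : realType} (D : set 'cV[R]_2) (f : oct R -> oct R) : Prop :=
  exists cF : 'cV[R]_4 -> 'M[R]_(4, 8),
    C1_on (Eset D) cF /\
    (forall A v, O3 A -> Eset D v -> cF (A *m v) = A *m cF v) /\
    (forall v I J, Eset D v -> slice_unit I -> slice_unit J -> oinner I J = 0 ->
        f (oreal (vc v 0) + vc v 1 *: I + vc v 2 *: J + vc v 3 *: omul I J) =
          row (inord 0) (cF v) + omul I (row (inord 1) (cF v))
          + omul J (row (inord 2) (cF v)) + omul (omul I J) (row (inord 3) (cF v))) /\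
    (forall v, Eset D v ->
       let d (i j : nat) : oct R := row (inord j) (pderiv cF i v) in
       [/\ d 0 0 - d 1 1 - d 2 2 - d 3 3 = 0,
           d 1 0 + d 0 1 - d 3 2 + d 2 3 = 0,
           d 2 0 + d 3 1 + d 0 2 - d 1 3 = 0 &
           d 3 0 - d 2 1 + d 1 2 + d 0 3 = 0]).

(* Main.v *)
Require Import Defs.
From HB Require Import structures.
From mathcomp Require Import all_boot all_order all_algebra.
From mathcomp Require Import all_classical all_reals all_analysis.
From mathcomp Require Import ring lra.
Import Order.TTheory GRing.Theory Num.Theory.
Import numFieldNormedType.Exports.
Local Open Scope classical_set_scope.
Local Open Scope ring_scope.
Set Implicit Arguments.
Unset Strict Implicit.
Unset Printing Implicit Defensive.

Section Oct.
Variable R : realType.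
Implicit Types x y z : oct R.

Definition oc x (k : nat) : R := x ord0 (inord k).
Definition obase (j : nat) : oct R := \row_(i < 8) (if val i == j then 1 else 0).

Lemma oct_ext x y : (forall k, (k < 8)%N -> oc x k = oc y k) -> x = y.
Proof.
move=> H; apply/rowP => i; have := H i (ltn_ord i); rewrite /oc inord_val.
by rewrite [ord0]ord1 => ->.
Qed.

Lemma ocD x y k : oc (x + y) k = oc x k + oc y k.
Proof. by rewrite /oc mxE. Qed.
Lemma ocB x y k : oc (x - y) k = oc x k - oc y k.
Proof. by rewrite /oc !mxE. Qed.
Lemma ocN x k : oc (- x) k = - oc x k.
Proof. by rewrite /oc mxE. Qed.
Lemma ocZ a x k : oc (a *: x) k = a * oc x k.
Proof. by rewrite /oc mxE. Qed.
Lemma oc0 k : oc 0 k = 0.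
Proof. by rewrite /oc mxE. Qed.
Lemma ocR r k : (k < 8)%N -> oc (oreal r) k = if k == 0%N then r else 0.
Proof. by move=> hk; rewrite /oc /oreal mxE /= inordK. Qed.
Lemma ocE j k : (k < 8)%N -> oc (obase j) k = if k == j then 1 else 0.
Proof. by move=> hk; rewrite /oc /obase mxE /= inordK. Qed.

Ltac os := rewrite /oc /omul /omk /qconj /qmul /qmk /qc /ofst /osnd;
  repeat (rewrite mxE || rewrite inordK //=);
  rewrite ?add0n ?add1n ?add2n ?add3n -?/(oc _ _).

Lemma om0 x y : oc (omul x y) 0 = oc x 0 * oc y 0 - oc x 1 * oc y 1 - oc x 2 * oc y 2 - oc x 3 * oc y 3 -
  (oc y 4 * oc x 4 - oc y 5 * - oc x 5 - oc y 6 * - oc x 6 - oc y 7 * - oc x 7).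
Proof. by os. Qed.
Lemma om1 x y : oc (omul x y) 1 = oc x 0 * oc y 1 + oc x 1 * oc y 0 + oc x 2 * oc y 3 - oc x 3 * oc y 2 -
 (oc y 4 * - oc x 5 + oc y 5 * oc x 4 + oc y 6 * - oc x 7 - oc y 7 * - oc x 6).
Proof. by os. Qed.
Lemma om2 x y : oc (omul x y) 2 = oc x 0 * oc y 2 - oc x 1 * oc y 3 + oc x 2 * oc y 0 + oc x 3 * oc y 1 -
 (oc y 4 * - oc x 6 - oc y 5 * - oc x 7 + oc y 6 * oc x 4 + oc y 7 * - oc x 5).
Proof. by os. Qed.
Lemma om3 x y : oc (omul x y) 3 = oc x 0 * oc y 3 + oc x 1 * oc y 2 - oc x 2 * oc y 1 + oc x 3 * oc y 0 -
 (oc y 4 * - oc x 7 + oc y 5 * - oc x 6 - oc y 6 * - oc x 5 + oc y 7 * oc x 4).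
Proof. by os. Qed.
Lemma om4 x y : oc (omul x y) 4 = oc x 0 * oc y 4 - - oc x 1 * oc y 5 - - oc x 2 * oc y 6 - - oc x 3 * oc y 7 +
 (oc y 0 * oc x 4 - oc y 1 * oc x 5 - oc y 2 * oc x 6 - oc y 3 * oc x 7).
Proof. by os. Qed.
Lemma om5 x y : oc (omul x y) 5 = oc x 0 * oc y 5 + - oc x 1 * oc y 4 + - oc x 2 * oc y 7 - - oc x 3 * oc y 6 +
 (oc y 0 * oc x 5 + oc y 1 * oc x 4 + oc y 2 * oc x 7 - oc y 3 * oc x 6).
Proof. by os. Qed.
Lemma om6 x y : oc (omul x y) 6 = oc x 0 * oc y 6 - - oc x 1 * oc y 7 + - oc x 2 * oc y 4 + - oc x 3 * oc y 5 +
 (oc y 0 * oc x 6 - oc y 1 * oc x 7 + oc y 2 * oc x 4 + oc y 3 * oc x 5).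
Proof. by os. Qed.
Lemma om7 x y : oc (omul x y) 7 = oc x 0 * oc y 7 + - oc x 1 * oc y 6 - - oc x 2 * oc y 5 + - oc x 3 * oc y 4 +
 (oc y 0 * oc x 7 + oc y 1 * oc x 6 - oc y 2 * oc x 5 + oc y 3 * oc x 4).
Proof. by os. Qed.

Definition omE := (om0, om1, om2, om3, om4, om5, om6, om7).

Lemma oinnerE x y : oinner x y = oc x 0 * oc y 0 + oc x 1 * oc y 1 + oc x 2 * oc y 2 + oc x 3 * oc y 3
  + oc x 4 * oc y 4 + oc x 5 * oc y 5 + oc x 6 * oc y 6 + oc x 7 * oc y 7.
Proof.
rewrite /oinner /oc !big_ord_recl big_ord0 addr0 /= !addrA.
by repeat congr (_ + _); congr (_ * _); congr (_ _ _); apply/val_inj; rewrite /= inordK.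
Qed.

Ltac ocase := let k := fresh "k" in let hk := fresh "hk" in
  apply: oct_ext => k hk; case: k hk => [|[|[|[|[|[|[|[|//]]]]]]]] _.

Lemma omul_x0 x : omul x 0 = 0.
Proof. ocase; rewrite omE !oc0; ring. Qed.

Lemma omulNl x y : omul (- x) y = - omul x y.
Proof. ocase; rewrite !ocN !omE !ocN; ring. Qed.

Lemma omul_e1e1 y : omul (obase 1) (omul (obase 1) y) = - y.
Proof. ocase; rewrite ocN !omE !ocE //=; ring. Qed.

Definition nim2 x := oc x 1 ^+ 2 + oc x 2 ^+ 2 + oc x 3 ^+ 2 + oc x 4 ^+ 2 + oc x 5 ^+ 2
  + oc x 6 ^+ 2 + oc x 7 ^+ 2.

Lemma su_char I : slice_unit I -> oc I 0 = 0 /\ nim2 I = 1.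
Proof.
move=> H.
have E : 2 * oc I 0 * (oc I 0 ^+ 2 + 1) = 2 * oc I 0 * (oc (omul I I) 0 + 1) +
   (oc I 1 * oc (omul I I) 1 + oc I 2 * oc (omul I I) 2 + oc I 3 * oc (omul I I) 3
  + oc I 4 * oc (omul I I) 4 + oc I 5 * oc (omul I I) 5 + oc I 6 * oc (omul I I) 6
  + oc I 7 * oc (omul I I) 7).
  by rewrite !omE; ring.
rewrite H !ocR //= in E.
have I0 : oc I 0 = 0.
  have E' : 2 * oc I 0 * (oc I 0 ^+ 2 + 1) = 0 by rewrite E; ring.
  move: E' => /eqP; rewrite !mulf_eq0 pnatr_eq0 /= => /orP[/eqP //|/eqP h].
  have : 0 < oc I 0 ^+ 2 + 1 by rewrite ltr_pwDr // sqr_ge0.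
  by rewrite h ltxx.
split => //.
have h0 := congr1 (oc^~ 0%N) H; rewrite /= om0 ocR //= I0 in h0.
rewrite /nim2; lra.
Qed.

Lemma su_of u : oc u 0 = 0 -> nim2 u = 1 -> slice_unit u.
Proof.
rewrite /nim2 => u0 n1; rewrite /slice_unit; ocase; rewrite omE ocR //= u0; lra.
Qed.

Lemma su_e1 : slice_unit (obase 1).
Proof. by apply: su_of; rewrite /nim2 !ocE //=; ring. Qed.
Lemma su_e2 : slice_unit (obase 2).
Proof. by apply: su_of; rewrite /nim2 !ocE //=; ring. Qed.
Lemma su_me1 : slice_unit (- obase 1).
Proof. by apply: su_of; rewrite /nim2 !ocN !ocE //=; ring. Qed.
Lemma in_e1e2 : oinner (obase 1) (obase 2) = 0.
Proof. by rewrite oinnerE !ocE //=; ring. Qed.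
Lemma in_me1e2 : oinner (- obase 1) (obase 2) = 0.
Proof. by rewrite oinnerE !ocN !ocE //=; ring. Qed.

Lemma nim2_comb I J (x1 x2 x3 : R) : oc I 0 = 0 -> oc J 0 = 0 ->
  let K := x1 *: I + x2 *: J + x3 *: omul I J in
  nim2 K = x1 ^+ 2 * nim2 I + x2 ^+ 2 * nim2 J
    + x3 ^+ 2 * (nim2 I * nim2 J - oinner I J ^+ 2) + 2 * x1 * x2 * oinner I J
  /\ oc K 0 = - x3 * oinner I J.
Proof.
move=> I0 J0 K; rewrite /K /nim2 oinnerE !ocD !ocZ !omE I0 J0; split; ring.
Qed.

End Oct.
Arguments obase {R} j.
Arguments oc {R} x k.
Arguments nim2 {R} x.
Arguments su_e1 {R}.
Arguments su_e2 {R}.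
Arguments su_me1 {R}.
Arguments in_e1e2 {R}.
Arguments in_me1e2 {R}.

Lemma nim2Z (R : realType) (a : R) (x : oct R) : nim2 (a *: x) = a ^+ 2 * nim2 x.
Proof. rewrite /nim2 !ocZ; ring. Qed.

Lemma pt_in_Omega (R : realType) (D : set 'cV[R]_2) x0 x1 x2 x3 (I J : oct R) :
  slice_unit I -> slice_unit J -> oinner I J = 0 ->
  D (pt2 x0 (Num.sqrt (x1 ^+ 2 + x2 ^+ 2 + x3 ^+ 2))) ->
  OmegaD D (oreal x0 + x1 *: I + x2 *: J + x3 *: omul I J).
Proof.
move=> sI sJ IJ HD.
have [I0 nI] := su_char sI; have [J0 nJ] := su_char sJ.
have [nK K0] := nim2_comb x1 x2 x3 I0 J0.
rewrite nI nJ IJ in nK K0.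
set s := x1 ^+ 2 + x2 ^+ 2 + x3 ^+ 2 in HD.
have s0 : 0 <= s by rewrite /s; apply: addr_ge0; [apply: addr_ge0|]; exact: sqr_ge0.
have [r0|rpos] := eqVneq (Num.sqrt s) 0.
  move: r0 => /eqP; rewrite sqrtr_eq0 => sle.
  have s00 : s = 0 by apply/eqP; rewrite eq_le sle s0.
  have [e1 e2 e3] : [/\ x1 = 0, x2 = 0 & x3 = 0].
    by move: s00; rewrite /s => /eqP; rewrite !paddr_eq0 ?sqr_ge0 ?addr_ge0 ?sqr_ge0 // !sqrf_eq0 => /andP[/andP[/eqP -> /eqP ->] /eqP ->].
  exists x0, 0, (obase 1); split; last split.
  - by move: HD; rewrite s00 sqrtr0.
  - exact: su_e1.
  - by rewrite e1 e2 e3 !scale0r !addr0.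
have rp : 0 < Num.sqrt s by rewrite lt_neqAle eq_sym rpos sqrtr_ge0.
set K := x1 *: I + x2 *: J + x3 *: omul I J in nK K0.
exists x0, (Num.sqrt s), ((Num.sqrt s)^-1 *: K); split => //; split.
  apply: su_of; first by rewrite ocZ K0 mulr0 mulr0.
  have nK' : nim2 K = s by rewrite nK /s; ring.
  rewrite nim2Z nK' exprVn sqr_sqrtr // mulVf //.
  by apply: contra rpos => /eqP ->; rewrite sqrtr0.
by rewrite scalerA mulfV // scale1r /K !addrA.
Qed.

Lemma pderiv_cst (R : realType) n (V : normedModType R) (c : V) k x :
  pderiv (fun _ : 'cV[R]_n.+1 => c) k x = 0.
Proof. exact: derive_cst. Qed.

Lemma C1_cst (R : realType) n (V : normedModType R) (U : set 'cV[R]_n.+1) (c : V) :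
  C1_on U (fun _ => c).
Proof.
move=> k; split => [x _|x _]; first exact: derivable_cst.
have -> : pderiv (fun _ : 'cV[R]_n.+1 => c) k = fun _ => 0.
  by apply: funext => y; exact: pderiv_cst.
exact: cst_continuous.
Qed.

Lemma backward (R : realType) (D : set 'cV[R]_2) (f : oct R -> oct R) (c : oct R) :
  (forall q, OmegaD D q -> f q = c) -> slice_Fueter_regular D f /\ slice_regular D f.
Proof.
move=> hc; split.
  pose Mc : 'M[R]_(4, 8) := \matrix_(i < 4, j < 8) (if val i == 0%N then c ord0 j else 0).
  have rowk k : (0 < k < 4)%N -> row (inord k) Mc = 0.
    by move=> /andP[k0 k4]; apply/rowP => j; rewrite !mxE /= inordK //; case: k k0 k4.
  have row0c : row (inord 0) Mc = c.
    by apply/rowP => j; rewrite !mxE /= inordK // [ord0]ord1.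
  exists (fun _ => Mc); split; first exact: C1_cst.
  split.
    move=> A v [_ Ae] _; apply/matrixP => i j.
    have i0 : (inord 0 : 'I_4) = ord0 by apply/val_inj; rewrite /= inordK.
    have Ai0 : A i ord0 = (val i == 0%N)%:R.
      have := congr1 (fun M : 'M[R]_(4,1) => M i ord0) Ae; rewrite /ebasis i0 -colE !mxE /= => ->.
      by rewrite andbT -(inj_eq val_inj).
    rewrite !mxE (bigD1 ord0) //= big1 ?addr0; last first.
      by move=> k /negbTE; rewrite !mxE -(inj_eq val_inj) /= => ->; rewrite mulr0.
    by rewrite !mxE Ai0 /=; case: (val i == 0%N); rewrite ?mul1r ?mul0r.
  split.
    move=> v I J Ev sI sJ IJ; rewrite hc; last first.
      exact: pt_in_Omega.
    by rewrite row0c !rowk // !omul_x0 !addr0.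
  move=> v Ev /=; rewrite !pderiv_cst !row0 !subr0 !addr0; by split.
exists (fun _ => c), (fun _ => 0); split.
  by move=> x0 x1 _; rewrite oppr0.
split.
  by move=> x0 x1 I HD sI; rewrite hc ?omul_x0 ?addr0 //; exists x0, x1, I.
split; first exact: C1_cst.
split; first exact: C1_cst.
by move=> p _; rewrite !pderiv_cst oppr0.
Qed.



Section Geo.
Variable R : realType.

Definition pt4 (a b c d : R) : 'cV[R]_4 := \col_(i < 4) nth 0 [:: a; b; c; d] i.

Lemma vc4 (a b c d : R) : [/\ vc (pt4 a b c d) 0 = a, vc (pt4 a b c d) 1 = b,
  vc (pt4 a b c d) 2 = c & vc (pt4 a b c d) 3 = d].
Proof. by rewrite /vc !mxE /= !inordK. Qed.

Lemma vc2 (a b : R) : vc (pt2 a b) 0 = a /\ vc (pt2 a b) 1 = b.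
Proof. by rewrite /vc !mxE /= !inordK. Qed.

Lemma pt2E (p : 'cV[R]_2) : p = pt2 (vc p 0) (vc p 1).
Proof.
apply/matrixP => i j; rewrite [j]ord1 !mxE /vc.
by case: i => [[|[|//]] ?] /=; congr (p _ _); apply/val_inj; rewrite /= inordK.
Qed.

Lemma pt2_sh0 (h a b : R) : h *: ebasis 0 + pt2 a b = pt2 (a + h) b.
Proof.
apply/matrixP => i j; rewrite [j]ord1 !mxE -!(inj_eq val_inj) /=.
case: i => [[|[|//]] ?] /=; rewrite ?inordK //= ?mulr1 ?mulr0 ?addr0 ?add0r //; exact: addrC.
Qed.

Lemma pt2_sh1 (h a b : R) : h *: ebasis 1 + pt2 a b = pt2 a (b + h).
Proof.
apply/matrixP => i j; rewrite [j]ord1 !mxE -!(inj_eq val_inj) /=.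
case: i => [[|[|//]] ?] /=; rewrite ?inordK //= ?mulr1 ?mulr0 ?addr0 ?add0r //; exact: addrC.
Qed.

Lemma pt4_sh0 (h a b c d : R) : h *: ebasis 0 + pt4 a b c d = pt4 (a + h) b c d.
Proof.
apply/matrixP => i j; rewrite [j]ord1 !mxE -!(inj_eq val_inj) /=.
case: i => [[|[|[|[|//]]]] ?] /=; rewrite ?inordK //= ?mulr1 ?mulr0 ?addr0 ?add0r //; exact: addrC.
Qed.
Lemma pt4_sh1 (h a b c d : R) : h *: ebasis 1 + pt4 a b c d = pt4 a (b + h) c d.
Proof.
apply/matrixP => i j; rewrite [j]ord1 !mxE -!(inj_eq val_inj) /=.
case: i => [[|[|[|[|//]]]] ?] /=; rewrite ?inordK //= ?mulr1 ?mulr0 ?addr0 ?add0r //; exact: addrC.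
Qed.
Lemma pt4_sh2 (h a b c d : R) : h *: ebasis 2 + pt4 a b c d = pt4 a b (c + h) d.
Proof.
apply/matrixP => i j; rewrite [j]ord1 !mxE -!(inj_eq val_inj) /=.
case: i => [[|[|[|[|//]]]] ?] /=; rewrite ?inordK //= ?mulr1 ?mulr0 ?addr0 ?add0r //; exact: addrC.
Qed.
Lemma pt4_sh3 (h a b c d : R) : h *: ebasis 3 + pt4 a b c d = pt4 a b c (d + h).
Proof.
apply/matrixP => i j; rewrite [j]ord1 !mxE -!(inj_eq val_inj) /=.
case: i => [[|[|[|[|//]]]] ?] /=; rewrite ?inordK //= ?mulr1 ?mulr0 ?addr0 ?add0r //; exact: addrC.
Qed.

Definition rot (p q : nat) (c s : R) : 'M[R]_4 :=
  \matrix_(i < 4, j < 4)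
    if val i == val j then (if (val i == p) || (val i == q) then c else 1)
    else if (val i == q) && (val j == p) then s
    else if (val i == p) && (val j == q) then - s else 0.

Lemma O3_rot p q (c s : R) : (p, q) \in [:: (1, 2); (1, 3); (2, 3)]%N -> c ^+ 2 + s ^+ 2 = 1 ->
  O3 (rot p q c s).
Proof.
move=> pq cs; split.
  move: pq; rewrite !inE => /orP[/eqP[-> ->]|/orP[/eqP[-> ->]|/eqP[-> ->]]];
  apply/matrixP => i j; rewrite !mxE !big_ord_recl big_ord0 addr0 !mxE /=;
  case: i => [[|[|[|[|//]]]] ?]; case: j => [[|[|[|[|//]]]] ?] /=; lra.
move: pq; rewrite !inE => /orP[/eqP[-> ->]|/orP[/eqP[-> ->]|/eqP[-> ->]]];
  apply/matrixP => i j; rewrite [j]ord1 !mxE !big_ord_recl big_ord0 addr0 !mxE -!(inj_eq val_inj) /=;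
  case: i => [[|[|[|[|//]]]] ?] /=; rewrite ?inordK //=; lra.
Qed.

Lemma rot_pt12 (c s a r : R) : rot 1 2 c s *m pt4 a r 0 0 = pt4 a (c * r) (s * r) 0.
Proof.
apply/matrixP => i j; rewrite [j]ord1 !mxE !big_ord_recl big_ord0 addr0 !mxE /=;
  case: i => [[|[|[|[|//]]]] ?] /=; ring.
Qed.
Lemma rot_pt13 (c s a r : R) : rot 1 3 c s *m pt4 a r 0 0 = pt4 a (c * r) 0 (s * r).
Proof.
apply/matrixP => i j; rewrite [j]ord1 !mxE !big_ord_recl big_ord0 addr0 !mxE /=;
  case: i => [[|[|[|[|//]]]] ?] /=; ring.
Qed.
Lemma rot_pt23 (a r : R) : rot 2 3 0 1 *m pt4 a r 0 0 = pt4 a r 0 0.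
Proof.
apply/matrixP => i j; rewrite [j]ord1 !mxE !big_ord_recl big_ord0 addr0 !mxE /=;
  case: i => [[|[|[|[|//]]]] ?] /=; ring.
Qed.

Lemma row_rot (p q : nat) (c s : R) (M : 'M[R]_(4, 8)) (k : nat) : (k < 4)%N ->
  row (inord k) (rot p q c s *m M) =
  \sum_(l < 4) rot p q c s (inord k) l *: row l M.
Proof.
move=> hk; apply/rowP => j; rewrite !mxE summxE; apply: eq_bigr => l _.
by rewrite !mxE.
Qed.

Lemma row_rot12_2 (c s : R) (M : 'M[R]_(4, 8)) :
  row (inord 2) (rot 1 2 c s *m M) = s *: row (inord 1) M + c *: row (inord 2) M.
Proof.
rewrite row_rot // !big_ord_recl big_ord0 addr0 !mxE /= inordK //=.
rewrite !scale0r !add0r addr0; congr (_ *: row _ M + _ *: row _ M); apply/val_inj; by rewrite /= inordK.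
Qed.
Lemma row_rot13_3 (c s : R) (M : 'M[R]_(4, 8)) :
  row (inord 3) (rot 1 3 c s *m M) = s *: row (inord 1) M + c *: row (inord 3) M.
Proof.
rewrite row_rot // !big_ord_recl big_ord0 addr0 !mxE /= inordK //=.
rewrite !scale0r ?add0r ?addr0; congr (_ *: row _ M + _ *: row _ M); apply/val_inj; by rewrite /= inordK.
Qed.
Lemma row_rot23_2 (M : 'M[R]_(4, 8)) :
  row (inord 2) (rot 2 3 0 1 *m M) = - row (inord 3) M.
Proof.
rewrite row_rot // !big_ord_recl big_ord0 addr0 !mxE /= inordK //=.
rewrite !scale0r ?add0r ?addr0 scaleN1r; congr (- row _ M); apply/val_inj; by rewrite /= inordK.
Qed.
Lemma row_rot23_3 (M : 'M[R]_(4, 8)) :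
  row (inord 3) (rot 2 3 0 1 *m M) = row (inord 2) M.
Proof.
rewrite row_rot // !big_ord_recl big_ord0 addr0 !mxE /= inordK //=.
rewrite !scale0r ?add0r ?addr0 scale1r; congr (row _ M); apply/val_inj; by rewrite /= inordK.
Qed.

End Geo.



Lemma half_eq (R : realType) m n (x y : 'M[R]_(m, n)) : x *+ 2 = y *+ 2 -> x = y.
Proof.
move=> h; have := congr1 (fun z => (2 : R)^-1 *: z) h.
by rewrite -(scaler_nat 2 x) -(scaler_nat 2 y) !scalerA mulVf ?pnatr_eq0 // !scale1r.
Qed.

Lemma neg_eq0 (R : realType) m n (x : 'M[R]_(m, n)) : x = - x -> x = 0.
Proof.
move=> h; apply: half_eq; rewrite mul0rn mulr2n {2}h; exact: subrr.
Qed.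


Lemma near_D (R : realType) (D : set 'cV[R]_2) a b : open D -> D (pt2 a b) ->
  exists2 e : R, 0 < e & forall a' b', `|a' - a| < e -> `|b' - b| < e -> D (pt2 a' b').
Proof.
move=> oD Dp.
have : nbhs (pt2 a b) D by apply: open_nbhs_nbhs; split.
move=> /nbhs_ballP [e e0 sub]; exists e => // a' b' ha hb; apply: sub.
split => // i j; rewrite !mxE.
by rewrite /ball /=; case: ifP; rewrite distrC.
Qed.

Lemma D_eq (R : realType) n (V W : normedModType R) (f : 'cV[R]_n.+1 -> V) x v
  (phi : {linear V -> W}) (g : R -> W) (L : W) :
  continuous phi -> derivable f x v ->
  (\forall h \near 0^', phi (h^-1 *: (f (h *: v + x) - f x)) = g h) ->
  g @ 0^' --> L -> phi ('D_v f x) = L.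
Proof.
move=> cphi df ng gL.
have q : (fun h => h^-1 *: (f (h *: v + x) - f x)) @ 0^' --> 'D_v f x by exact: df.
have q2 : (phi \o (fun h => h^-1 *: (f (h *: v + x) - f x))) @ 0^' --> phi ('D_v f x).
  by apply: continuous_cvg => //; exact: cphi.
have q3 : (phi \o (fun h => h^-1 *: (f (h *: v + x) - f x))) @ 0^' --> L.
  apply: cvg_trans gL; apply: near_eq_cvg; near=> h; rewrite /= (near ng h) //.
by rewrite -(cvg_lim (@norm_hausdorff _ W) q2) (cvg_lim (@norm_hausdorff _ W) q3).
Unshelve. all: by end_near. Qed.

Lemma row_cont (R : realType) m n (k : 'I_m) : continuous (fun M : 'M[R]_(m, n) => row k M).
Proof.
move=> /= M s /= /nbhs_ballP [e e0 es].
apply/nbhs_ballP; exists e => //= N [_ MN]; apply: es; split => // i j.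
by rewrite !mxE; exact: MN.
Qed.

Lemma rho_cvg (R : realType) (r : R) : 0 <= r ->
  (fun h : R => Num.sqrt (r ^+ 2 + h ^+ 2)) @ 0 --> r.
Proof.
move=> r0.
have e : Num.sqrt (r ^+ 2 + 0 ^+ 2) = r by rewrite expr0n /= addr0 sqrtr_sqr ger0_norm.
suff H : (fun h : R => Num.sqrt (r ^+ 2 + h ^+ 2)) @ 0 --> Num.sqrt (r ^+ 2 + 0 ^+ 2) by rewrite e in H.
apply: continuous_cvg; first exact: sqrt_continuous.
apply: cvgD; first exact: cvg_cst.
exact: (@exprn_continuous R 2 0).
Qed.

Lemma line0E (R : realType) (V : normedModType R) (F : 'cV[R]_2 -> V) b t :
  derivable (fun s => F (pt2 s b)) t 1 = derivable F (pt2 t b) (ebasis 0) /\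
  'D_1 (fun s => F (pt2 s b)) t = 'D_(ebasis 0) F (pt2 t b).
Proof.
rewrite /derivable /derive.
suff -> : (fun h : R => h^-1 *: (((fun s => F (pt2 s b)) \o shift t) (h *: 1) - F (pt2 t b)))
   = (fun h => h^-1 *: ((F \o shift (pt2 t b)) (h *: ebasis 0) - F (pt2 t b))) by [].
apply: funext => h /=; rewrite pt2_sh0; congr (_ *: (F (pt2 _ b) - _)).
by rewrite -[h *: 1]/(h * 1) mulr1 addrC.
Qed.

Lemma line1E (R : realType) (V : normedModType R) (F : 'cV[R]_2 -> V) a t :
  derivable (fun s => F (pt2 a s)) t 1 = derivable F (pt2 a t) (ebasis 1) /\
  'D_1 (fun s => F (pt2 a s)) t = 'D_(ebasis 1) F (pt2 a t).
Proof.
rewrite /derivable /derive.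
suff -> : (fun h : R => h^-1 *: (((fun s => F (pt2 a s)) \o shift t) (h *: 1) - F (pt2 a t)))
   = (fun h => h^-1 *: ((F \o shift (pt2 a t)) (h *: ebasis 1) - F (pt2 a t))) by [].
apply: funext => h /=; rewrite pt2_sh1; congr (_ *: (F (pt2 a _) - _)).
by rewrite -[h *: 1]/(h * 1) mulr1 addrC.
Qed.

Lemma nim2_cont (R : realType) : continuous (@nim2 R).
Proof.
move=> x; rewrite /nim2.
have H k : (fun q : oct R => oc q k ^+ 2) @ x --> oc x k ^+ 2.
  have h1 := @coord_continuous R 1 8 ord0 (inord k) x.
  have h2 := @exprn_continuous R 2 (oc x k).
  exact: (continuous_comp h1 h2).
repeat apply: cvgD.
all: first [exact: H | exact: nbhs_filter | exact: (@mx_nbhs_filter R _ 1 8 x)].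
Qed.

Lemma nimOm (R : realType) (x0 x1 : R) (I : oct R) : nim2 (oreal x0 + x1 *: I) = x1 ^+ 2 * nim2 I.
Proof. by rewrite /nim2 !ocD !ocZ !ocR //=; ring. Qed.

Section Fwd.
Variables (R : realType) (D : set 'cV[R]_2) (f : oct R -> oct R).
Hypothesis oD : open D.
Hypothesis symD : forall x0 x1 : R, D (pt2 x0 x1) -> D (pt2 x0 (- x1)).
Variables (cF : 'cV[R]_4 -> 'M[R]_(4, 8)) (F1 F2 : 'cV[R]_2 -> oct R).
Hypothesis cFC1 : C1_on (Eset D) cF.
Hypothesis cFeq : forall A v, O3 A -> Eset D v -> cF (A *m v) = A *m cF v.
Hypothesis cFf : forall v I J, Eset D v -> slice_unit I -> slice_unit J -> oinner I J = 0 ->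
        f (oreal (vc v 0) + vc v 1 *: I + vc v 2 *: J + vc v 3 *: omul I J) =
          row (inord 0) (cF v) + omul I (row (inord 1) (cF v))
          + omul J (row (inord 2) (cF v)) + omul (omul I J) (row (inord 3) (cF v)).
Hypothesis cFF : forall v, Eset D v ->
       let d (i j : nat) : oct R := row (inord j) (pderiv cF i v) in
       [/\ d 0 0 - d 1 1 - d 2 2 - d 3 3 = 0,
           d 1 0 + d 0 1 - d 3 2 + d 2 3 = 0,
           d 2 0 + d 3 1 + d 0 2 - d 1 3 = 0 &
           d 3 0 - d 2 1 + d 1 2 + d 0 3 = 0].
Hypothesis par : forall x0 x1, D (pt2 x0 x1) ->
        F1 (pt2 x0 (- x1)) = F1 (pt2 x0 x1) /\ F2 (pt2 x0 (- x1)) = - F2 (pt2 x0 x1).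
Hypothesis Ff : forall x0 x1 I, D (pt2 x0 x1) -> slice_unit I ->
        f (oreal x0 + x1 *: I) = F1 (pt2 x0 x1) + omul I (F2 (pt2 x0 x1)).
Hypothesis F1C1 : C1_on D F1.
Hypothesis F2C1 : C1_on D F2.
Hypothesis CR : forall p, D p ->
        pderiv F1 0 p = pderiv F2 1 p /\ pderiv F1 1 p = - pderiv F2 0 p.

Lemma Eset_pt4 a b c d : D (pt2 a (Num.sqrt (b ^+ 2 + c ^+ 2 + d ^+ 2))) -> Eset D (pt4 a b c d).
Proof. by rewrite /Eset /=; case: (vc4 a b c d) => -> -> -> ->. Qed.

Lemma cF_axis x0 s : 0 < s -> D (pt2 x0 s) ->
  [/\ row (inord 0) (cF (pt4 x0 s 0 0)) = F1 (pt2 x0 s),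
      row (inord 1) (cF (pt4 x0 s 0 0)) = F2 (pt2 x0 s),
      row (inord 2) (cF (pt4 x0 s 0 0)) = 0 &
      row (inord 3) (cF (pt4 x0 s 0 0)) = 0].
Proof.
move=> s0 Dp.
have Ew : Eset D (pt4 x0 s 0 0).
  by apply: Eset_pt4; rewrite expr0n /= !addr0 sqrtr_sqr ger0_norm // ltW.
have OB : O3 (rot 2 3 (0 : R) 1) by apply: O3_rot; rewrite ?inE //; ring.
have hB := cFeq OB Ew; rewrite rot_pt23 in hB.
set M := cF (pt4 x0 s 0 0) in hB *.
have M3 : row (inord 3) M = row (inord 2) M by rewrite {1}hB row_rot23_3.
have M2 : row (inord 2) M = 0.
  by apply: neg_eq0; rewrite {1}hB row_rot23_2 M3.
have M3' : row (inord 3) M = 0 by rewrite M3 M2.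
have [v0 v1 v2 v3] := vc4 x0 s 0 0.
have h1 := cFf Ew su_e1 su_e2 in_e1e2.
have h2 := cFf Ew su_me1 su_e2 in_me1e2.
rewrite -/M v0 v1 v2 v3 M2 M3' !omul_x0 !scale0r !addr0 in h1 h2.
rewrite (Ff Dp su_e1) in h1; rewrite (Ff Dp su_me1) in h2.
rewrite !omulNl in h2.
have e0 : row (inord 0) M = F1 (pt2 x0 s).
  apply: half_eq; rewrite !mulr2n.
  have : (F1 (pt2 x0 s) + omul (obase 1) (F2 (pt2 x0 s))) + (F1 (pt2 x0 s) - omul (obase 1) (F2 (pt2 x0 s)))
    = (row (inord 0) M + omul (obase 1) (row (inord 1) M)) + (row (inord 0) M - omul (obase 1) (row (inord 1) M)).
    by rewrite h1 h2.
  by rewrite addrACA subrr addr0 addrACA subrr addr0 => ->.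
rewrite e0 in h1; move/addrI: h1 => h1.
have := congr1 (omul (obase 1)) h1; rewrite !omul_e1e1 => /oppr_inj ->.
by split.
Qed.

Lemma Ew_axis x0 s : 0 < s -> D (pt2 x0 s) -> Eset D (pt4 x0 s 0 0).
Proof.
by move=> s0 Dp; apply: Eset_pt4; rewrite expr0n /= !addr0 sqrtr_sqr ger0_norm // ltW.
Qed.

Lemma rot_cs (a b : R) : 0 < Num.sqrt (a ^+ 2 + b ^+ 2) ->
  (a / Num.sqrt (a ^+ 2 + b ^+ 2)) ^+ 2 + (b / Num.sqrt (a ^+ 2 + b ^+ 2)) ^+ 2 = 1.
Proof.
move=> r0; set r := Num.sqrt _ in r0 *.
have r2 : r ^+ 2 = a ^+ 2 + b ^+ 2 by rewrite sqr_sqrtr // addr_ge0 // sqr_ge0.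
rewrite !expr_div_n -mulrDl -r2 mulfV // sqrf_eq0; exact: lt0r_neq0.
Qed.

Lemma cF_rot2 x0 a b : 0 < Num.sqrt (a ^+ 2 + b ^+ 2) ->
  D (pt2 x0 (Num.sqrt (a ^+ 2 + b ^+ 2))) ->
  row (inord 2) (cF (pt4 x0 a b 0)) = (b / Num.sqrt (a ^+ 2 + b ^+ 2)) *: F2 (pt2 x0 (Num.sqrt (a ^+ 2 + b ^+ 2))).
Proof.
move=> r0 Dp; have cs := rot_cs r0; set r := Num.sqrt _ in r0 Dp cs *.
have OA : O3 (rot 1 2 (a / r) (b / r)) by apply: O3_rot; rewrite ?inE.
have h := cFeq OA (Ew_axis r0 Dp).
rewrite rot_pt12 !divfK ?lt0r_neq0 // in h.
have [_ e1 e2 _] := cF_axis r0 Dp.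
by rewrite h row_rot12_2 e1 e2 scaler0 addr0.
Qed.

Lemma cF_rot3 x0 a b : 0 < Num.sqrt (a ^+ 2 + b ^+ 2) ->
  D (pt2 x0 (Num.sqrt (a ^+ 2 + b ^+ 2))) ->
  row (inord 3) (cF (pt4 x0 a 0 b)) = (b / Num.sqrt (a ^+ 2 + b ^+ 2)) *: F2 (pt2 x0 (Num.sqrt (a ^+ 2 + b ^+ 2))).
Proof.
move=> r0 Dp; have cs := rot_cs r0; set r := Num.sqrt _ in r0 Dp cs *.
have OA : O3 (rot 1 3 (a / r) (b / r)) by apply: O3_rot; rewrite ?inE.
have h := cFeq OA (Ew_axis r0 Dp).
rewrite rot_pt13 !divfK ?lt0r_neq0 // in h.
have [_ e1 _ e3] := cF_axis r0 Dp.
by rewrite h row_rot13_3 e1 e3 scaler0 addr0.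
Qed.

Lemma G_cont x0 r : D (pt2 x0 r) -> {for r, continuous (fun s => F2 (pt2 x0 s))}.
Proof.
move=> Dp; apply: differentiable_continuous; apply/derivable1_diffP.
have := (F2C1 ord_max).1 _ Dp.
rewrite /derivable.
suff -> : (fun h : R => h^-1 *: (((fun s => F2 (pt2 x0 s)) \o shift r) (h *: 1) - F2 (pt2 x0 r)))
   = (fun h => h^-1 *: ((F2 \o shift (pt2 x0 r)) (h *: ebasis (@ord_max 1)) - F2 (pt2 x0 r))) by [].
apply: funext => h /=; rewrite pt2_sh1; congr (_ *: (F2 (pt2 x0 _) - _)).
by rewrite -[h *: 1]/(h * 1) mulr1 addrC.
Qed.

Lemma F2_pos x0 r : 0 < r -> D (pt2 x0 r) -> F2 (pt2 x0 r) = 0.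
Proof.
move=> r0 Dp.
have Ew := Ew_axis r0 Dp.
have [e e0 He] := near_D oD Dp.
have [ax0 ax1 ax2 ax3] := cF_axis r0 Dp.
have [Fu _ _ _] := cFF Ew.
have d00 : row (inord 0) (pderiv cF 0 (pt4 x0 r 0 0)) = pderiv F1 0 (pt2 x0 r).
  apply: (D_eq (phi := row (inord 0))
    (g := fun h => h^-1 *: (F1 (h *: ebasis 0 + pt2 x0 r) - F1 (pt2 x0 r)))).
  - exact: row_cont.
  - exact: (cFC1 ord0).1 _ Ew.
  - near=> h; rewrite linearZ linearB /= pt4_sh0 pt2_sh0 ax0.
    have D' : D (pt2 (x0 + h) r).
      apply: He; last by rewrite subrr normr0.
      rewrite (addrC x0) addrK; near: h; exact: dnbhs0_lt.
    by have [-> _ _ _] := cF_axis r0 D'.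
  - exact: (F1C1 ord0).1 _ Dp.
have Fu' : row (inord 0) (pderiv cF 0 (pt4 x0 r 0 0)) - row (inord 1) (pderiv cF 1 (pt4 x0 r 0 0))
  - row (inord 2) (pderiv cF 2 (pt4 x0 r 0 0)) - row (inord 3) (pderiv cF 3 (pt4 x0 r 0 0)) = 0 := Fu.
have d11 : row (inord 1) (pderiv cF 1 (pt4 x0 r 0 0)) = pderiv F2 1 (pt2 x0 r).
  apply: (D_eq (phi := row (inord 1))
    (g := fun h => h^-1 *: (F2 (h *: ebasis 1 + pt2 x0 r) - F2 (pt2 x0 r)))).
  - exact: row_cont.
  - exact: (cFC1 (Ordinal (isT : (1 < 4)%N))).1 _ Ew.
  - near=> h; rewrite linearZ linearB /= pt4_sh1 pt2_sh1 ax1.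
    have hr : `|h| < r by near: h; exact: dnbhs0_lt.
    have he : `|h| < e by near: h; exact: dnbhs0_lt.
    have rh : 0 < r + h by move: hr; rewrite ltr_norml; lra.
    have D' : D (pt2 x0 (r + h)).
      apply: He; first by rewrite subrr normr0.
      by rewrite (addrC r) addrK.
    by have [_ -> _ _] := cF_axis rh D'.
  - exact: (F2C1 (@ord_max 1)).1 _ Dp.
pose rho h := Num.sqrt (r ^+ 2 + h ^+ 2).
have rhoc := rho_cvg (ltW r0).
have gL : (fun h => (rho h)^-1 *: F2 (pt2 x0 (rho h))) @ 0^' --> r^-1 *: F2 (pt2 x0 r).
  apply: cvg_trans (cvg_app _ (@nbhs_dnbhs _ (0:R))) _.
  apply: cvgZ.
    by apply: cvgV; [exact: lt0r_neq0 | exact: rhoc].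
  exact: (@cvg_comp _ _ _ rho (fun s => F2 (pt2 x0 s)) _ _ _ rhoc (G_cont Dp)).
have rhop h : 0 < rho h.
  by rewrite /rho sqrtr_gt0; have := exprn_gt0 2 r0; have := sqr_ge0 h; lra.
have d22 : row (inord 2) (pderiv cF 2 (pt4 x0 r 0 0)) = r^-1 *: F2 (pt2 x0 r).
  apply: (D_eq (phi := row (inord 2)) (g := fun h => (rho h)^-1 *: F2 (pt2 x0 (rho h)))).
  - exact: row_cont.
  - exact: (cFC1 (Ordinal (isT : (2 < 4)%N))).1 _ Ew.
  - near=> h; rewrite linearZ linearB /= pt4_sh2 add0r ax2 subr0.
    have hn : h != 0 by near: h; exact: nbhs_dnbhs_neq.
    have hd : `|r - rho h| < e.
      by near: h; apply: nbhs_dnbhs; exact: cvgr_dist_lt rhoc _ e0.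
    rewrite cF_rot2 ?rhop //; last by apply: He; rewrite ?subrr ?normr0 // distrC.
    by rewrite scalerA mulrA mulVf // mul1r.
  - exact: gL.
have d33 : row (inord 3) (pderiv cF 3 (pt4 x0 r 0 0)) = r^-1 *: F2 (pt2 x0 r).
  apply: (D_eq (phi := row (inord 3)) (g := fun h => (rho h)^-1 *: F2 (pt2 x0 (rho h)))).
  - exact: row_cont.
  - exact: (cFC1 (Ordinal (isT : (3 < 4)%N))).1 _ Ew.
  - near=> h; rewrite linearZ linearB /= pt4_sh3 add0r ax3 subr0.
    have hn : h != 0 by near: h; exact: nbhs_dnbhs_neq.
    have hd : `|r - rho h| < e.
      by near: h; apply: nbhs_dnbhs; exact: cvgr_dist_lt rhoc _ e0.
    rewrite cF_rot3 ?rhop //; last by apply: He; rewrite ?subrr ?normr0 // distrC.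
    by rewrite scalerA mulrA mulVf // mul1r.
  - exact: gL.
rewrite d00 d11 d22 d33 (CR Dp).1 subrr sub0r -opprD in Fu'.
have X0 : r^-1 *: F2 (pt2 x0 r) = 0.
  by apply: half_eq; rewrite mul0rn mulr2n; apply: oppr_inj; rewrite Fu' oppr0.
by move/eqP: X0; rewrite scaler_eq0 invr_eq0 (negbTE (lt0r_neq0 r0)) /= => /eqP.
Unshelve. all: by end_near. Qed.

Lemma F2_0 p : D p -> F2 p = 0.
Proof.
rewrite (pt2E p); set a := vc p 0; set b := vc p 1 => Dp.
have [bneg|bpos|b0] := ltgtP b 0.
- have Dn := symD Dp; have bp : 0 < - b by rewrite oppr_gt0.
  have := F2_pos bp Dn.
  by rewrite (par Dp).2 => /eqP; rewrite oppr_eq0 => /eqP.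
- exact: F2_pos bpos Dp.
- by rewrite b0 in Dp *; apply: neg_eq0; have := (par Dp).2; rewrite oppr0.
Qed.

Lemma dF2_0 p (k : nat) : (k < 2)%N -> D p -> pderiv F2 k p = 0.
Proof.
move=> k2 Dp; rewrite /pderiv /derive.
apply: (lim_near_cst (@norm_hausdorff _ _)).
move: Dp; rewrite (pt2E p); set a := vc p 0; set b := vc p 1 => Dp.
have [e e0 He] := near_D oD Dp.
near=> h.
have he : `|h| < e by near: h; exact: dnbhs0_lt.
rewrite /= (F2_0 Dp) subr0.
case: k k2 => [|[|//]] _.
  by rewrite pt2_sh0 F2_0 ?scaler0 //; apply: He; rewrite ?subrr ?normr0 // (addrC a) addrK.
by rewrite pt2_sh1 F2_0 ?scaler0 //; apply: He; rewrite ?subrr ?normr0 // (addrC b) addrK.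
Unshelve. all: by end_near. Qed.

Lemma dF1_0 p : D p -> pderiv F1 0 p = 0 /\ pderiv F1 1 p = 0.
Proof.
move=> Dp; have [-> ->] := CR Dp.
by rewrite !dF2_0 // oppr0.
Qed.

Lemma coord_deriv0 (g : R -> R) (G : R -> oct R) j t :
  (forall h, g h = G h ord0 j) -> derivable G t 1 -> 'D_1 G t = 0 -> is_derive t 1 g 0.
Proof.
move=> gG dG DG.
have q : (fun h => h^-1 *: (G (h *: 1 + t) - G t)) @ 0^' --> 'D_1 G t by exact: dG.
have q2 : ((fun M : oct R => M ord0 j) \o (fun h => h^-1 *: (G (h *: 1 + t) - G t))) @ 0^' --> 0.
  have q3 : ((fun M : oct R => M ord0 j) \o (fun h => h^-1 *: (G (h *: 1 + t) - G t))) @ 0^' --> ('D_1 G t) ord0 j.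
    by apply: continuous_cvg => //; exact: coord_continuous.
  by rewrite DG mxE in q3.
have e : (fun h => h^-1 *: (g (h *: 1 + t) - g t)) = ((fun M : oct R => M ord0 j) \o (fun h => h^-1 *: (G (h *: 1 + t) - G t))).
  by apply: funext => h /=; rewrite !gG !mxE.
have dg : derivable g t 1 by rewrite /derivable /= e; exact: cvgP q2.
apply: DeriveDef => //; rewrite /derive /= e; exact: (cvg_lim (@norm_hausdorff _ _) q2).
Qed.

Lemma F1_const0 (b lo hi : R) : lo <= hi -> (forall t, lo <= t <= hi -> D (pt2 t b)) ->
  F1 (pt2 lo b) = F1 (pt2 hi b).
Proof.
move=> lh HD; apply/rowP => j.
pose g t := F1 (pt2 t b) ord0 j.
have dg t : lo <= t <= hi -> is_derive t 1 g 0.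
  move=> /HD Dt; apply: (coord_deriv0 (G := fun t => F1 (pt2 t b))) => //.
    by rewrite (line0E F1 b t).1; exact: (F1C1 ord0).1 _ Dt.
  by rewrite (line0E F1 b t).2; exact: (dF1_0 Dt).1.
have cg : {within `[lo, hi], continuous g}.
  apply: derivable_within_continuous => x; rewrite in_itv /= => /dg [dx _]; exact: dx.
have dgo : forall x, x \in `]lo, hi[%R -> is_derive x 1 g 0.
  by move=> x; rewrite in_itv /= => /andP[h1 h2]; apply: dg; rewrite !ltW.
have [c _ hc] := MVT_segment lh dgo cg.
by move: hc; rewrite mul0r => /eqP; rewrite subr_eq0 => /eqP.
Qed.

Lemma F1_const1 (a lo hi : R) : lo <= hi -> (forall t, lo <= t <= hi -> D (pt2 a t)) ->
  F1 (pt2 a lo) = F1 (pt2 a hi).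
Proof.
move=> lh HD; apply/rowP => j.
pose g t := F1 (pt2 a t) ord0 j.
have dg t : lo <= t <= hi -> is_derive t 1 g 0.
  move=> /HD Dt; apply: (coord_deriv0 (G := fun t => F1 (pt2 a t))) => //.
    by rewrite (line1E F1 a t).1; exact: (F1C1 (@ord_max 1)).1 _ Dt.
  by rewrite (line1E F1 a t).2; exact: (dF1_0 Dt).2.
have cg : {within `[lo, hi], continuous g}.
  apply: derivable_within_continuous => x; rewrite in_itv /= => /dg [dx _]; exact: dx.
have dgo : forall x, x \in `]lo, hi[%R -> is_derive x 1 g 0.
  by move=> x; rewrite in_itv /= => /andP[h1 h2]; apply: dg; rewrite !ltW.
have [c _ hc] := MVT_segment lh dgo cg.
by move: hc; rewrite mul0r => /eqP; rewrite subr_eq0 => /eqP.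
Qed.

Lemma F1_box (a b : R) : D (pt2 a b) -> exists2 e : R, 0 < e &
  forall a' b', `|a' - a| < e -> `|b' - b| < e -> D (pt2 a' b') /\ F1 (pt2 a' b') = F1 (pt2 a b).
Proof.
move=> Dp; have [e e0 He] := near_D oD Dp.
exists e => // a' b' ha hb; split; first exact: He.
have step0 : F1 (pt2 a' b') = F1 (pt2 a b').
  have Hs lo hi : lo <= hi -> `|lo - a| < e -> `|hi - a| < e -> F1 (pt2 lo b') = F1 (pt2 hi b').
    move=> lh hl hh; apply: F1_const0 => // t /andP[t1 t2]; apply: He => //.
    move: hl hh; rewrite !ltr_norml => /andP[? ?] /andP[? ?]; apply/andP; split; lra.
  have a0 : `|a - a| < e by rewrite subrr normr0.
  case: (lerP a a') => h; first by rewrite (Hs a a').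
  by rewrite (Hs a' a) // ltW.
have Hs lo hi : lo <= hi -> `|lo - b| < e -> `|hi - b| < e -> F1 (pt2 a lo) = F1 (pt2 a hi).
  move=> lh hl hh; apply: F1_const1 => // t /andP[t1 t2]; apply: He; first by rewrite subrr normr0.
  move: hl hh; rewrite !ltr_norml => /andP[? ?] /andP[? ?]; apply/andP; split; lra.
have b0 : `|b - b| < e by rewrite subrr normr0.
rewrite step0; case: (lerP b b') => h; first by rewrite (Hs b b').
by rewrite (Hs b' b) // ltW.
Qed.

Definition phi (q : oct R) := F1 (pt2 (oc q 0) (Num.sqrt (nim2 q))).

Lemma f_phi q : OmegaD D q -> f q = phi q /\ D (pt2 (oc q 0) (Num.sqrt (nim2 q))).
Proof.
case=> x0 [x1 [I [Dp [sI ->]]]].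
have [I0 nI] := su_char sI.
rewrite /phi nimOm nI mulr1 sqrtr_sqr ocD ocZ I0 mulr0 addr0 ocR //=.
rewrite Ff // F2_0 // omul_x0 addr0.
have [x1p|x1n] := lerP 0 x1; first by rewrite ger0_norm.
by rewrite ltr0_norm // (par Dp).1; split => //; exact: symD.
Qed.

Lemma loc_const q : OmegaD D q -> \forall q' \near q, OmegaD D q' -> f q' = f q.
Proof.
move=> Oq; have [fq Dq] := f_phi Oq.
have [e e0 Hb] := F1_box Dq.
have c0 : (fun q' : oct R => oc q' 0) @ q --> oc q 0 := @coord_continuous R 1 8 ord0 (inord 0) q.
have c1 : (fun q' : oct R => Num.sqrt (nim2 q')) @ q --> Num.sqrt (nim2 q).
  have h1 := @nim2_cont R q; have h2 := @sqrt_continuous R (nim2 q).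
  exact: (continuous_comp h1 h2).
near=> q' => Oq'; have [fq' _] := f_phi Oq'.
rewrite fq fq' /phi; apply: (Hb _ _ _ _).2; rewrite distrC.
  by near: q'; exact: cvgr_dist_lt c0 _ e0.
by near: q'; exact: cvgr_dist_lt c1 _ e0.
Unshelve. all: by end_near. Qed.

Lemma f_const q0 : connected (OmegaD D) -> OmegaD D q0 -> forall q, OmegaD D q -> f q = f q0.
Proof.
move=> conn Oq0.
pose B := [set q | OmegaD D q /\ f q = f q0].
have BO : B = OmegaD D.
  apply: conn; first by exists q0.
    exists (interior [set q | OmegaD D q -> f q = f q0]); first exact: open_interior.
    apply/seteqP; split => q.
      case=> Oq fq; split => //; rewrite /interior /=.
      by apply: filterS (loc_const Oq) => y h Oy; rewrite h.
    by case=> Oq Iq; split => //; exact: (nbhs_singleton Iq).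
  exists (~` interior [set q | OmegaD D q -> f q <> f q0]).
    by apply: open_closedC; exact: open_interior.
  apply/seteqP; split => q.
    by case=> Oq fq; split => // Iq; exact: (nbhs_singleton Iq Oq fq).
  case=> Oq nIq; split => //; apply: contrapT => fqc; apply: nIq.
  by rewrite /interior /=; apply: filterS (loc_const Oq) => y h Oy; rewrite h.
by move=> q Oq; have [] : B q by rewrite BO.
Qed.

End Fwd.

Unset Implicit Arguments.
Set Strict Implicit.

Theorem corollary2p4 (R : realType) (D : set 'cV[R]_2) (f : oct R -> oct R) :
  open D -> D !=set0 ->
  (forall x0 x1 : R, D (pt2 x0 x1) -> D (pt2 x0 (- x1))) ->
  connected (OmegaD D) ->
  (slice_Fueter_regular D f /\ slice_regular D f <->
   exists c : oct R, forall q, OmegaD D q -> f q = c).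
Proof.
move=> oD [p Dp] symD conn; split; last first.
  by case=> c hc; exact: backward hc.
case=> [[cF [cFC1 [cFeq [cFf cFF]]]] [F1 [F2 [par [Ff [F1C1 [F2C1 CR]]]]]]].
have Dp' : D (pt2 (vc p 0) (vc p 1)) by rewrite -pt2E.
have Oq0 : OmegaD D (oreal (vc p 0) + vc p 1 *: obase 1).
  by exists (vc p 0), (vc p 1), (obase 1); split => //; split => //; exact: su_e1.
exists (f (oreal (vc p 0) + vc p 1 *: obase 1)) => q Oq.
by apply: (@f_const R D f oD symD cF F1 F2) => //.
Qed.
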